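(* Under Conditions 1 and 2, there exist constants $T_0>0$ and $n_0\ge1$ such that for all $n\ge n_0$ and all $u\in\mathbb R$ with $|u|<1/T_0$, $$\Big|\int_0^\infty\sin(ut)\,\bar\Lambda^{(n)}_\beta(t)\,dt\Big|\ge\frac3{16}\sigma|u| .$$
   Context: Notation: $\mathbb Z_+=\{1,2,\dots\}$, $\mathbb R_+=[0,\infty)$. For each $n\ge1$: $\lambda^{(n)}>0$; a probability $\Lambda^{(n)}$ on $\mathbb R_+$ with tail $\bar\Lambda^{(n)}(t)=\Lambda^{(n)}((t,\infty))$, $\eta^{(n)}=\int_0^\infty y\Lambda^{(n)}(dy)$, $\sigma^{(n)}=\frac12\int_0^\infty y^2\Lambda^{(n)}(dy)$ finite; probability laws $(p_k^{(n)})_{k\ge1}$, $(q_k^{(n)})_{k\ge1}$ on $\mathbb Z_+$ with generating functions $g^{(n)},h^{(n)}$, $m^{(n)}=\sum_kkp_k^{(n)}<\infty$; $\gamma_n>0$ with $\gamma_n\to\infty$, $\gamma_n/n\to\gamma_*\in[0,\infty)$. $\phi^{(n)}(z)=n\gamma_n[g^{(n)}(1-z/n)-(1-z/n)]$, $\psi^{(n)}(z)=\gamma_n[1-h^{(n)}(1-z/n)]$ for $z\in[0,n]$. Condition 1: (i) $\lambda^{(n)}\to\lambda>0$, $\eta^{(n)}\to\eta>0$, $\sigma^{(n)}\to\sigma>0$, $\gamma_n(1-\lambda^{(n)}\eta^{(n)})\to b\in\mathbb R$; (ii) $\psi^{(n)}\to\psi$ uniformly on compacts of $[0,\infty)$;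 (iii) $\{\phi^{(n)}\}$ is uniformly Lipschitz on bounded intervals and converges uniformly on compacts to a continuous $\phi$. Under Condition 1, $\lambda\eta=1$ and $m:=\lim_n\gamma_n(1-m^{(n)})$ exists (so $\gamma_n(1-\lambda^{(n)}\eta^{(n)}m^{(n)})\to b+m$). Condition 2 (for some $\alpha\in(1,2)$): (1) there are $C,k_0>0$ with $n\gamma_n\sum_{k\ge k_0}(k/n)^\alpha p^{(n)}_k+\sum_kk^\alpha q^{(n)}_k\le C$ for all $n$, and $\lim_{k_1\to\infty}\limsup_n\gamma_n\sum_{k\ge k_1}kp^{(n)}_k=0$; (2) there are $C_0>0$ and a probability $\Lambda^*$ on $\mathbb R_+$ with $\int t^{2\alpha}\Lambda^*(dt)<\infty$ and $\bar\Lambda^{(n)}\le C_0\bar\Lambda^*$ for all $n$. Fix $\beta\in[0,\infty)$ with $\beta>-(b+m)/(\sigma\lambda)$. Define $\bar\Lambda_\beta^{(n)}(t)=e^{-\beta t/\gamma_n}\bar\Lambda^{(n)}(t)$. *)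

(* Defs.v *)
From Stdlib Require Import Reals Lra Lia.
Open Scope R_scope.

Definition ImpInt0 (f : R -> R) (l : R) : Prop :=
  exists F : R -> R,
    (forall T, 0 <= T -> exists pr : Riemann_integrable f 0 T, RiemannInt pr = F T) /\
    (forall eps, eps > 0 -> exists M, forall T, T >= M -> Rabs (F T - l) < eps).

(* L is the tail function t |-> Lam((t,oo)) (t >= 0) of a probability
   measure Lam on R_+ ; such functions are in bijection with probability
   measures on R_+ (the atom at 0 has mass 1 - L 0). *)
Definition is_tail_fun (L : R -> R) : Prop :=
  (forall t, 0 <= t -> 0 <= L t <= 1) /\
  (forall s t, 0 <= s -> s <= t -> L t <= L s) /\
  (forall t, 0 <= t -> forall eps, eps > 0 ->
     exists d, d > 0 /\ forall s, t <= s -> s < t + d -> Rabs (L s - L t) < eps) /\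
  (forall eps, eps > 0 -> exists M, forall t, t >= M -> L t < eps).

(* A probability law on Z_+ = {1,2,...}, given by its masses p k (p 0 = 0). *)
Definition is_pmf_pos (p : nat -> R) : Prop :=
  p 0%nat = 0 /\ (forall k, 0 <= p k) /\ infinite_sum p 1.

(* real power with the convention 0^a = 0 (used only for a > 0) *)
Definition rpow (x a : R) : R := if Rlt_dec 0 x then Rpower x a else 0.

Definition phin (g : nat -> R -> R) (gam : nat -> R) (n : nat) (z : R) : R :=
  INR n * gam n * (g n (1 - z / INR n) - (1 - z / INR n)).

Definition psin (h : nat -> R -> R) (gam : nat -> R) (n : nat) (z : R) : R :=
  gam n * (1 - h n (1 - z / INR n)).

Definition Standing (lam : nat -> R) (Lbar : nat -> R -> R) (eta sig : nat -> R)
  (p q : nat -> nat -> R) (g h : nat -> R -> R) (mn : nat -> R) (gam : nat -> R)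
  : Prop :=
  (forall n, (1 <= n)%nat -> lam n > 0) /\
  (forall n, (1 <= n)%nat -> is_tail_fun (Lbar n)) /\
  (* eta^(n) = int y Lam(dy) = int_0^oo Lbar(t) dt *)
  (forall n, (1 <= n)%nat -> ImpInt0 (Lbar n) (eta n)) /\
  (* sig^(n) = 1/2 int y^2 Lam(dy) = int_0^oo t Lbar(t) dt, finite *)
  (forall n, (1 <= n)%nat -> ImpInt0 (fun t => t * Lbar n t) (sig n)) /\
  (forall n, (1 <= n)%nat -> is_pmf_pos (p n) /\ is_pmf_pos (q n)) /\
  (forall n, (1 <= n)%nat -> forall s, -1 <= s <= 1 ->
      infinite_sum (fun k => p n k * s ^ k) (g n s) /\
      infinite_sum (fun k => q n k * s ^ k) (h n s)) /\
  (forall n, (1 <= n)%nat -> infinite_sum (fun k => INR k * p n k) (mn n)) /\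
  (forall n, (1 <= n)%nat -> gam n > 0) /\
  cv_infty gam /\
  (exists gstar, 0 <= gstar /\ Un_cv (fun n => gam n / INR n) gstar).

Definition Condition1 (lam : nat -> R) (eta sig : nat -> R)
  (g h : nat -> R -> R) (gam : nat -> R)
  (lm et sg b : R) (psi phi : R -> R) : Prop :=
  (Un_cv lam lm /\ lm > 0) /\ (Un_cv eta et /\ et > 0) /\ (Un_cv sig sg /\ sg > 0) /\
  Un_cv (fun n => gam n * (1 - lam n * eta n)) b /\
  (forall K, 0 <= K -> forall eps, eps > 0 -> exists N, forall n, (N <= n)%nat ->
     forall z, 0 <= z <= K -> z <= INR n -> Rabs (psin h gam n z - psi z) < eps) /\
  (forall K, 0 <= K -> exists Lc, forall n, (1 <= n)%nat -> forall x y,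
     0 <= x <= K -> 0 <= y <= K -> x <= INR n -> y <= INR n ->
     Rabs (phin g gam n x - phin g gam n y) <= Lc * Rabs (x - y)) /\
  (forall K, 0 <= K -> forall eps, eps > 0 -> exists N, forall n, (N <= n)%nat ->
     forall z, 0 <= z <= K -> z <= INR n -> Rabs (phin g gam n z - phi z) < eps) /\
  (forall x, 0 <= x -> forall eps, eps > 0 -> exists d, d > 0 /\
     forall y, 0 <= y -> Rabs (y - x) < d -> Rabs (phi y - phi x) < eps).

Definition Condition2 (alpha : R) (Lbar : nat -> R -> R) (p q : nat -> nat -> R)
  (gam : nat -> R) : Prop :=
  1 < alpha < 2 /\
  (exists C k0, C > 0 /\ (1 <= k0)%nat /\ forall n, (1 <= n)%nat ->
     exists S1 S2,
       infinite_sum (fun k => if Nat.leb k0 k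
                              then Rpower (INR k / INR n) alpha * p n k else 0) S1 /\
       infinite_sum (fun k => rpow (INR k) alpha * q n k) S2 /\
       INR n * gam n * S1 + S2 <= C) /\
  (forall eps, eps > 0 -> exists K1, forall k1, (K1 <= k1)%nat ->
     exists N, forall n, (N <= n)%nat -> forall S,
       infinite_sum (fun k => if Nat.leb k1 k then INR k * p n k else 0) S ->
       gam n * S < eps) /\
  (* (2) int t^(2 alpha) Lam*(dt) < oo is written via the tail:
         int t^(2 alpha) Lam*(dt) = 2 alpha int_0^oo t^(2 alpha - 1) Lbar*(t) dt *)
  (exists C0 Lstar, C0 > 0 /\ is_tail_fun Lstar /\
     (exists I, ImpInt0 (fun t => rpow t (2 * alpha - 1) * Lstar t) I) /\
     forall n, (1 <= n)%nat -> forall t, 0 <= t -> Lbar n t <= C0 * Lstar t).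

(* Main.v *)
Require Import Defs.
From Stdlib Require Import Reals Lra Lia List ClassicalEpsilon RList.
Open Scope R_scope.

Fixpoint gridl (a h : R) (i N : nat) : list R :=
  match N with
  | O => (a + INR i * h) :: nil
  | S N' => (a + INR i * h) :: gridl a h (S i) N'
  end.
Fixpoint valsl (v : nat -> R) (i N : nat) : list R :=
  match N with O => nil | S N' => v i :: valsl v (S i) N' end.
Fixpoint sfun (v : nat -> R) (a h : R) (i N : nat) (t : R) : R :=
  match N with
  | O => v i
  | S N' => if Rle_dec t (a + INR (S i) * h) then v i else sfun v a h (S i) N' t
  end.
Fixpoint sumv (v : nat -> R) (i N : nat) : R :=
  match N with O => 0 | S N' => v i + sumv v (S i) N' end.

Lemma gridl_len a h i N : length (gridl a h i N) = S N.
Proof. revert i; induction N; intros; simpl; auto. Qed.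
Lemma valsl_len v i N : length (valsl v i N) = N.
Proof. revert i; induction N; intros; simpl; auto. Qed.
Lemma gridl_pos a h i N k : (k <= N)%nat -> pos_Rl (gridl a h i N) k = a + INR (i + k) * h.
Proof.
  revert i k; induction N; intros i k Hk.
  - assert (k = 0%nat) by lia; subst; simpl; rewrite Nat.add_0_r; auto.
  - destruct k; simpl.
    + rewrite Nat.add_0_r; auto.
    + rewrite IHN by lia. replace (S i + k)%nat with (i + S k)%nat by lia; reflexivity.
Qed.
Lemma valsl_pos v i N k : (k < N)%nat -> pos_Rl (valsl v i N) k = v (i + k)%nat.
Proof.
  revert i k; induction N; intros i k Hk; [lia|].
  destruct k; simpl.
  - rewrite Nat.add_0_r; auto.
  - rewrite IHN by lia. f_equal. lia.
Qed.
Lemma sfun_open v a h i N k t : 0 < h -> (k < N)%nat ->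
  a + INR (i + k) * h < t < a + INR (i + S k) * h -> sfun v a h i N t = v (i + k)%nat.
Proof.
  intro hp; revert i k; induction N; intros i k Hk Ht; [lia|].
  cbn [sfun]. destruct (Rle_dec t (a + INR (S i) * h)) as [H|H].
  - destruct k. { rewrite Nat.add_0_r; auto. }
    exfalso. assert (INR (S i) <= INR (i + S k)) by (apply le_INR; lia).
    nra.
  - destruct k.
    + exfalso. rewrite Nat.add_0_r, Nat.add_1_r in Ht. lra.
    + replace (i + S k)%nat with (S i + k)%nat by lia.
      apply IHN; [lia|]. replace (S i + k)%nat with (i + S k)%nat by lia.
      replace (S i + S k)%nat with (i + S (S k))%nat by lia. auto.
Qed.
Lemma sfun_cover a h i N t : 0 < h -> (1 <= N)%nat ->
  a + INR i * h <= t <= a + INR (i + N) * h ->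
  exists k, (k < N)%nat /\ a + INR (i + k) * h <= t <= a + INR (i + S k) * h /\
    forall v, sfun v a h i N t = v (i + k)%nat.
Proof.
  intro hp; revert i; induction N; intros i HN Ht; [lia|].
  cbn [sfun]. destruct (Rle_dec t (a + INR (S i) * h)) as [H|H].
  - exists 0%nat. rewrite Nat.add_0_r, Nat.add_1_r. split; [lia|]. split; [lra|auto].
  - destruct N.
    + exfalso. rewrite Nat.add_1_r in Ht. lra.
    + destruct (IHN (S i)) as [k [Hk [Ht2 Hv]]]; [lia| |].
      * split; [lra|]. replace (S i + S N)%nat with (i + S (S N))%nat by lia. lra.
      * exists (S k). split; [lia|].
        replace (i + S k)%nat with (S i + k)%nat by lia.
        replace (i + S (S k))%nat with (S i + S k)%nat by lia. auto.
Qed.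
Lemma Int_SF_grid v a h i N : Int_SF (valsl v i N) (gridl a h i N) = h * sumv v i N.
Proof.
  revert i; induction N; intros i.
  - cbn [Int_SF valsl gridl sumv]. ring.
  - destruct N.
    + cbn [Int_SF valsl gridl sumv]. rewrite S_INR. ring.
    + change (gridl a h i (S (S N))) with ((a + INR i * h) :: gridl a h (S i) (S N)).
      change (valsl v i (S (S N))) with (v i :: valsl v (S i) (S N)).
      change (sumv v i (S (S N))) with (v i + sumv v (S i) (S N)).
      rewrite Rmult_plus_distr_l, <- IHN.
      change (gridl a h (S i) (S N)) with ((a + INR (S i) * h) :: gridl a h (S (S i)) N).
      cbn [Int_SF]. rewrite S_INR. ring.
Qed.
Lemma ordered_grid a h i N : 0 <= h -> ordered_Rlist (gridl a h i N).
Proof.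
  intros hp k Hk. rewrite gridl_len in Hk. simpl in Hk.
  rewrite !gridl_pos by lia.
  assert (INR (i + k) <= INR (i + S k)) by (apply le_INR; lia). nra.
Qed.

Definition mkSF (v : nat -> R) (a b : R) (N : nat) (hab : a < b) (hN : (1 <= N)%nat) :
  StepFun a b.
Proof.
  set (h := (b - a) / INR N).
  assert (hp : 0 < h).
  { unfold h. apply Rdiv_lt_0_compat; [lra|]. apply lt_0_INR; lia. }
  apply (mkStepFun (fe := sfun v a h 0 N)).
  exists (gridl a h 0 N). exists (valsl v 0 N).
  unfold adapted_couple. rewrite gridl_len, valsl_len.
  rewrite Rmin_left, Rmax_right by lra.
  split; [apply ordered_grid; lra|].
  split; [rewrite gridl_pos by lia; simpl; ring|].
  split.
  { simpl pred. rewrite gridl_pos by lia. simpl. unfold h. field.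
    apply not_0_INR; lia. }
  split; [auto|].
  intros k Hk. simpl in Hk. intros t Ht. unfold open_interval in Ht.
  rewrite !gridl_pos in Ht by lia. rewrite valsl_pos by lia.
  apply sfun_open; auto.
Defined.

Lemma mkSF_int v a b N hab hN : RiemannInt_SF (mkSF v a b N hab hN) = (b - a) / INR N * sumv v 0 N.
Proof.
  unfold RiemannInt_SF. destruct (Rle_dec a b); [|lra].
  unfold subdivision_val, subdivision. simpl. apply Int_SF_grid.
Qed.
Lemma mkSF_val v a b N hab hN t : mkSF v a b N hab hN t = sfun v a ((b - a) / INR N) 0 N t.
Proof. reflexivity. Qed.

Lemma sumv_nonneg w i N : (forall k, (i <= k < i + N)%nat -> 0 <= w k) -> 0 <= sumv w i N.
Proof.
  revert i; induction N; intros i H; cbn [sumv]; [lra|].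
  assert (0 <= w i) by (apply H; lia).
  assert (0 <= sumv w (S i) N) by (apply IHN; intros; apply H; lia). lra.
Qed.

Lemma grid_integrable f a b : a < b ->
  (forall eps, 0 < eps -> exists N (w : nat -> R), (1 <= N)%nat /\
    (forall k, (k < N)%nat -> forall t,
       a + INR k * ((b - a) / INR N) <= t <= a + INR (S k) * ((b - a) / INR N) ->
       Rabs (f t - f (a + INR k * ((b - a) / INR N))) <= w k) /\
    (b - a) / INR N * sumv w 0 N < eps) ->
  Riemann_integrable f a b.
Proof.
  intros hab H eps.
  destruct (constructive_indefinite_description _ (H eps (cond_pos eps))) as [N HN].
  destruct (constructive_indefinite_description _ HN) as [w [hN [Hw Hs]]].
  set (h := (b - a) / INR N) in *.
  assert (hp : 0 < h).
  { unfold h. apply Rdiv_lt_0_compat; [lra|]. apply lt_0_INR; lia. }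
  exists (mkSF (fun k => f (a + INR k * h)) a b N hab hN).
  exists (mkSF w a b N hab hN).
  split.
  - intros t Ht. rewrite Rmin_left, Rmax_right in Ht by lra.
    rewrite !mkSF_val. fold h.
    destruct (sfun_cover a h 0 N t hp hN) as [k [Hk [Ht2 Hv]]].
    { simpl. replace (INR N * h) with (b - a).
      - lra.
      - unfold h. field. apply not_0_INR; lia. }
    rewrite !Hv. simpl in Ht2 |- *. apply Hw; auto.
  - rewrite mkSF_int. fold h. rewrite Rabs_right; auto.
    apply Rle_ge. apply Rmult_le_pos; [lra|]. apply sumv_nonneg.
    intros k Hk. apply Rle_trans with (Rabs (f (a + INR k * h) - f (a + INR k * h))).
    + apply Rabs_pos.
    + apply Hw; [lia|]. rewrite S_INR. nra.
Qed.

Lemma sumv_tele c F i N :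
  sumv (fun k => c + (F k - F (S k))) i N = INR N * c + (F i - F (i + N)%nat).
Proof.
  revert i; induction N; intros i; cbn [sumv].
  - rewrite Nat.add_0_r. simpl. ring.
  - rewrite IHN. replace (S i + N)%nat with (i + S N)%nat by lia. rewrite S_INR. ring.
Qed.

Lemma prod_integrable g L a b : a < b ->
  (forall x, a <= x <= b -> continuity_pt g x) ->
  (forall x, a <= x <= b -> Rabs (g x) <= 1) ->
  (forall x, a <= x <= b -> 0 <= L x <= 1) ->
  (forall x y, a <= x -> x <= y -> y <= b -> L y <= L x) ->
  Riemann_integrable (fun t => g t * L t) a b.
Proof.
  intros hab Hc Hg HL Hmon. apply grid_integrable; auto.
  intros eps Heps.
  assert (He1 : 0 < eps / (2 * (b - a))) by (apply Rdiv_lt_0_compat; lra).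
  destruct (Heine_cor2 Hc (mkposreal _ He1)) as [del Hdel]. simpl in Hdel.
  set (m := Rmin del (eps / 2)).
  assert (Hm : 0 < m) by (unfold m; apply Rmin_glb_lt; [apply cond_pos|lra]).
  destruct (archimed_cor1 (m / (b - a))) as [N [HN1 HN2]].
  { apply Rdiv_lt_0_compat; lra. }
  set (h := (b - a) / INR N).
  assert (HNp : 0 < INR N) by (apply lt_0_INR; lia).
  assert (hp : 0 < h) by (unfold h; apply Rdiv_lt_0_compat; lra).
  assert (hm : h < m).
  { unfold h. apply Rmult_lt_reg_r with (/ (b - a)). { apply Rinv_0_lt_compat; lra. }
    replace ((b - a) / INR N * / (b - a)) with (/ INR N) by (field; lra). exact HN1. }
  assert (hdel : h < del) by (apply Rlt_le_trans with m; auto; apply Rmin_l).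
  assert (heps : h < eps / 2) by (apply Rlt_le_trans with m; auto; apply Rmin_r).
  assert (HNh : INR N * h = b - a) by (unfold h; field; lra).
  exists N, (fun k => eps / (2 * (b - a)) + (L (a + INR k * h) - L (a + INR (S k) * h))).
  split; [lia|]. fold h. split.
  - intros k Hk t Ht.
    assert (Hk1 : INR (S k) <= INR N) by (apply le_INR; lia).
    assert (Hk0 : 0 <= INR k) by apply pos_INR.
    rewrite S_INR in Hk1, Ht.
    set (x := a + INR k * h) in *.
    assert (Hxh : a + (INR k + 1) * h = x + h) by (unfold x; ring).
    assert (Hx : a <= x <= b) by (unfold x; split; nra).
    assert (Htab : a <= t <= b) by (split; nra).
    replace (g t * L t - g x * L x) with ((g t - g x) * L t + g x * (L t - L x)) by ring.
    eapply Rle_trans; [apply Rabs_triang|]. rewrite !Rabs_mult.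
    assert (H1 : Rabs (g t - g x) < eps / (2 * (b - a))).
    { apply Hdel; auto. rewrite Rabs_right by lra. lra. }
    destruct (HL t Htab) as [HLt0 HLt1].
    rewrite (Rabs_right (L t)) by lra.
    assert (Hgx := Hg x Hx).
    assert (HLxt : L t <= L x) by (apply Hmon; lra).
    assert (Hxb : x + h <= b) by (rewrite <- Hxh; nra).
    assert (HLe : L (x + h) <= L t) by (apply Hmon; lra).
    rewrite (Rabs_left1 (L t - L x)) by lra.
    rewrite S_INR, Hxh.
    assert (0 <= Rabs (g t - g x)) by apply Rabs_pos.
    assert (0 <= Rabs (g x)) by apply Rabs_pos.
    nra.
  - rewrite sumv_tele. simpl (0 + N)%nat.
    replace (a + INR 0 * h) with a by (simpl; ring).
    rewrite HNh. replace (h * (INR N * (eps / (2 * (b - a))) + (L a - L (a + (b - a)))))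
      with (INR N * h * (eps / (2 * (b - a))) + h * (L a - L (a + (b - a)))) by ring.
    rewrite HNh. replace (a + (b - a)) with b by ring.
    assert (HLa := HL a ltac:(lra)). assert (HLb := HL b ltac:(lra)).
    replace ((b - a) * (eps / (2 * (b - a)))) with (eps / 2) by (field; lra).
    nra.
Qed.

Lemma sin_pos_bound y : 0 <= y <= 1 -> y - y^3/6 <= sin y <= y.
Proof.
  intro Hy.
  destruct (pre_sin_bound y 0 ltac:(lra) ltac:(lra)) as [H1 H2].
  assert (E1 : sin_approx y (2 * 0 + 1) = y - y^3/6) by (unfold sin_approx, sin_term; simpl; field).
  assert (E2 : sin_approx y (2 * (0 + 1)) = y - y^3/6 + y^5/120) by (unfold sin_approx, sin_term; simpl; field).
  rewrite E1 in H1. rewrite E2 in H2.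
  split; [lra|]. assert (0 <= y^3) by (apply pow_le; lra).
  assert (y^5 <= y^3).
  { replace (y^5) with (y^3 * (y*y)) by ring. rewrite <- (Rmult_1_r (y^3)) at 2. apply Rmult_le_compat_l; nra. }
  lra.
Qed.

Lemma sin_cubic y : Rabs y <= 1 -> Rabs (sin y - y) <= Rabs y ^ 3 / 6.
Proof.
  intro Hy. destruct (Rle_dec 0 y).
  - rewrite (Rabs_right y) in * by lra. destruct (sin_pos_bound y) as [H1 H2]; [lra|].
    rewrite Rabs_left1 by lra. lra.
  - rewrite (Rabs_left y) in * by lra. destruct (sin_pos_bound (-y)) as [H1 H2]; [lra|].
    rewrite sin_neg in H1, H2. rewrite Rabs_right by lra.
    replace ((-y)^3) with (- y^3) in H1 by ring. lra.
Qed.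

Lemma sin_abs_le y : Rabs (sin y) <= Rabs y.
Proof.
  destruct (Rle_dec (Rabs y) 1).
  - assert (H := sin_cubic y r).
    assert (Rabs y ^ 3 <= Rabs y) by (assert (0 <= Rabs y) by apply Rabs_pos; nra).
    assert (Rabs (sin y) <= Rabs (sin y - y) + Rabs y).
    { replace (sin y) with ((sin y - y) + y) at 1 by ring. apply Rabs_triang. }
    destruct (Rle_dec 0 y).
    + rewrite (Rabs_right y) in * by lra. destruct (sin_pos_bound y) as [H3 H4]; [lra|].
      rewrite Rabs_right; lra.
    + rewrite (Rabs_left y) in * by lra. destruct (sin_pos_bound (-y)) as [H3 H4]; [lra|].
      rewrite sin_neg in H3, H4. rewrite Rabs_left1; lra.
  - assert (H := SIN_bound y). apply Rnot_le_lt in n.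
    unfold Rabs at 1. destruct (Rcase_abs (sin y)); lra.
Qed.

Lemma exp_neg_bounds x : 0 <= x -> 0 < exp (- x) <= 1 /\ 1 - exp (- x) <= x.
Proof.
  intro Hx. split; [split|].
  - apply exp_pos.
  - rewrite <- exp_0. destruct (Req_dec x 0). { subst. rewrite Ropp_0. lra. }
    left. apply exp_increasing. lra.
  - assert (H := exp_ineq1_le (- x)). lra.
Qed.

Definition lim_at_infty (S : R -> R) (l : R) : Prop :=
  forall eps, eps > 0 -> exists M, forall T, T >= M -> Rabs (S T - l) < eps.

Lemma cauchy_lim (S : R -> R) :
  (forall eps, eps > 0 -> exists M, forall T1 T2, T1 >= M -> T2 >= M -> Rabs (S T1 - S T2) < eps) ->
  exists l, lim_at_infty S l.
Proof.
  intro HC.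
  assert (Hcc : Cauchy_crit (fun k => S (INR k))).
  { intros eps Heps. destruct (HC eps Heps) as [M HM].
    destruct (INR_archimed 1 M ltac:(lra)) as [N HN].
    exists N. intros n m Hn Hm. unfold Rdist. apply HM.
    - apply Rle_ge. apply Rle_trans with (INR N); [lra|]. apply le_INR; lia.
    - apply Rle_ge. apply Rle_trans with (INR N); [lra|]. apply le_INR; lia. }
  destruct (R_complete _ Hcc) as [l Hl]. exists l.
  intros eps Heps. destruct (HC (eps/2) ltac:(lra)) as [M HM].
  destruct (Hl (eps/2) ltac:(lra)) as [N0 HN0].
  destruct (INR_archimed 1 M ltac:(lra)) as [N1 HN1].
  exists M. intros T HT.
  set (k := max N0 N1).
  assert (Hk1 : INR N1 <= INR k) by (apply le_INR; lia).
  assert (H1 := HM T (INR k) HT ltac:(lra)).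
  assert (H2 := HN0 k ltac:(lia)). unfold Rdist in H2.
  replace (S T - l) with ((S T - S (INR k)) + (S (INR k) - l)) by ring.
  eapply Rle_lt_trans; [apply Rabs_triang|]. lra.
Qed.

Lemma lim_ineq (A B C : R -> R) a b c u c1 c2 :
  lim_at_infty A a -> lim_at_infty B b -> lim_at_infty C c ->
  (forall T, T >= 0 -> Rabs (A T - u * B T) <= c1 * B T + c2 * C T) ->
  Rabs (a - u * b) <= c1 * b + c2 * c.
Proof.
  intros HA HB HC H.
  apply Rle_plus_epsilon. intros eps Heps.
  set (k := 1 + Rabs u + Rabs c1 + Rabs c2).
  assert (Hk : 0 < k) by (unfold k; generalize (Rabs_pos u) (Rabs_pos c1) (Rabs_pos c2); lra).
  set (e := eps / k).
  assert (He : 0 < e) by (unfold e; apply Rdiv_lt_0_compat; lra).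
  destruct (HA e He) as [M1 H1]. destruct (HB e He) as [M2 H2]. destruct (HC e He) as [M3 H3].
  set (T := Rmax (Rmax M1 M2) (Rmax M3 0)).
  assert (Q1 := Rmax_l (Rmax M1 M2) (Rmax M3 0)). assert (Q2 := Rmax_r (Rmax M1 M2) (Rmax M3 0)).
  assert (Q3 := Rmax_l M1 M2). assert (Q4 := Rmax_r M1 M2). assert (Q5 := Rmax_l M3 0). assert (Q6 := Rmax_r M3 0).
  fold T in Q1, Q2.
  assert (T1 : T >= M1) by lra. assert (T2 : T >= M2) by lra. assert (T3 : T >= M3) by lra. assert (T4 : T >= 0) by lra.
  specialize (H1 T T1). specialize (H2 T T2). specialize (H3 T T3). specialize (H T T4).
  assert (E1 : Rabs (a - u * b) <= Rabs (A T - u * B T) + Rabs (A T - a) + Rabs u * Rabs (B T - b)).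
  { replace (a - u * b) with ((A T - u * B T) - (A T - a) + u * (B T - b)) by ring.
    rewrite <- Rabs_mult. eapply Rle_trans; [apply Rabs_triang|].
    apply Rplus_le_compat_r. eapply Rle_trans; [apply Rabs_triang|].
    rewrite Rabs_Ropp. lra. }
  assert (E2 : c1 * B T <= c1 * b + Rabs c1 * e).
  { replace (c1 * B T) with (c1 * b + c1 * (B T - b)) by ring. apply Rplus_le_compat_l.
    eapply Rle_trans; [apply Rle_abs|]. rewrite Rabs_mult. apply Rmult_le_compat_l; [apply Rabs_pos|lra]. }
  assert (E3 : c2 * C T <= c2 * c + Rabs c2 * e).
  { replace (c2 * C T) with (c2 * c + c2 * (C T - c)) by ring. apply Rplus_le_compat_l.
    eapply Rle_trans; [apply Rle_abs|]. rewrite Rabs_mult. apply Rmult_le_compat_l; [apply Rabs_pos|lra]. }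
  assert (E4 : Rabs u * Rabs (B T - b) <= Rabs u * e) by (apply Rmult_le_compat_l; [apply Rabs_pos|lra]).
  assert (E5 : e * k = eps) by (unfold e; field; lra).
  unfold k in E5. nra.
Qed.

Lemma int_abs_le f g a b (p1 : Riemann_integrable f a b) (p2 : Riemann_integrable g a b) :
  a <= b -> (forall x, a < x < b -> Rabs (f x) <= g x) -> Rabs (RiemannInt p1) <= RiemannInt p2.
Proof.
  intros hab H.
  eapply Rle_trans; [apply (RiemannInt_P17 p1 (RiemannInt_P16 p1) hab)|].
  apply RiemannInt_P19; auto.
Qed.

Lemma int_bound f1 f2 f3 a b u c1 c2 (p1 : Riemann_integrable f1 a b)
  (p2 : Riemann_integrable f2 a b) (p3 : Riemann_integrable f3 a b) :
  a <= b -> (forall x, a < x < b -> Rabs (f1 x - u * f2 x) <= c1 * f2 x + c2 * f3 x) ->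
  Rabs (RiemannInt p1 - u * RiemannInt p2) <= c1 * RiemannInt p2 + c2 * RiemannInt p3.
Proof.
  intros hab H.
  set (pD := RiemannInt_P10 (- u) p1 p2).
  set (p0 := RiemannInt_P14 a b 0).
  set (pB1 := RiemannInt_P10 c1 p0 p2).
  set (pB := RiemannInt_P10 c2 pB1 p3).
  assert (EB : RiemannInt pB = c1 * RiemannInt p2 + c2 * RiemannInt p3).
  { rewrite (RiemannInt_P13 pB1 p3 pB), (RiemannInt_P13 p0 p2 pB1), (RiemannInt_P15 p0). ring. }
  rewrite <- EB. replace (RiemannInt p1 - u * RiemannInt p2) with (RiemannInt p1 + - u * RiemannInt p2) by ring.
  rewrite <- (RiemannInt_P13 p1 p2 pD).
  apply int_abs_le; auto.
  intros x Hx. unfold fct_cte. replace (f1 x + - u * f2 x) with (f1 x - u * f2 x) by ring.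
  replace (0 + c1 * f2 x + c2 * f3 x) with (c1 * f2 x + c2 * f3 x) by ring. auto.
Qed.
Lemma divnn a b : 0 <= a -> 0 < b -> 0 <= a / b.
Proof. intros; unfold Rdiv; apply Rmult_le_pos; [auto| left; apply Rinv_0_lt_compat; auto]. Qed.

Lemma pw u beta gm M X C0 alpha x L Ls : 0 < x -> 1 <= M -> Rabs u < 1 / (4 * M) ->
  0 <= beta -> 0 < gm -> 1 < alpha -> Rpower M (2 * alpha - 2) = X ->
  0 <= L <= 1 -> L <= C0 * Ls -> 0 < C0 ->
  Rabs (sin (u * x) * (exp (- beta * x / gm) * L) - u * (x * L)) <=
  (Rabs u * (u ^ 2 * M ^ 2 / 6 + beta * M / gm)) * (x * L) +
  (2 * Rabs u * C0 / X) * (rpow x (2 * alpha - 1) * Ls).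
Proof.
  intros Hx HM Hu Hb Hg Ha HX HL HLs HC0.
  assert (HXp : 0 < X) by (rewrite <- HX; apply exp_pos).
  assert (Hrp : rpow x (2 * alpha - 1) = x * X * Rpower x (2 * alpha - 2) / Rpower M (2 * alpha - 2)).
  { unfold rpow. destruct (Rlt_dec 0 x); [|lra].
    replace (2 * alpha - 1) with (1 + (2 * alpha - 2)) by ring. rewrite Rpower_plus, Rpower_1 by lra.
    rewrite HX. field. lra. }
  assert (Hpow : Rpower M (2 * alpha - 2) <= Rpower x (2 * alpha - 2) \/ x <= M).
  { destruct (Rle_dec x M); [right; auto|left]. apply Rle_Rpower_l; lra. }
  assert (Hrpos : 0 <= rpow x (2 * alpha - 1)).
  { unfold rpow. destruct (Rlt_dec 0 x); [left; apply exp_pos|lra]. }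
  set (E := exp (- beta * x / gm)).
  assert (HE : 0 < E <= 1 /\ 1 - E <= beta * x / gm).
  { unfold E. replace (- beta * x / gm) with (- (beta * x / gm)) by (field; lra).
    apply exp_neg_bounds. apply divnn; nra. }
  set (y := u * x).
  assert (Hay : Rabs y = Rabs u * x) by (unfold y; rewrite Rabs_mult, (Rabs_right x) by lra; ring).
  replace (sin y * (E * L) - u * (x * L)) with ((sin y * E - y) * L) by (unfold y; ring).
  rewrite Rabs_mult, (Rabs_right L) by lra.
  assert (Hua := Rabs_pos u).
  assert (Hmain : Rabs (sin y * E - y) <= Rabs u * (u ^ 2 * M ^ 2 / 6 + beta * M / gm) * x +
             2 * Rabs u / X * rpow x (2 * alpha - 1)).
  { assert (Hsy := sin_abs_le y).
    destruct (Rle_dec x M) as [HxM|HxM].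
    - assert (HuM : Rabs u * M < 1 / 4).
      { apply Rmult_lt_compat_r with (r := M) in Hu; [|lra].
        replace (1 / (4 * M) * M) with (1/4) in Hu by (field; lra). lra. }
      assert (Hy1 : Rabs y <= 1) by (rewrite Hay; nra).
      assert (Hc := sin_cubic y Hy1).
      replace (sin y * E - y) with ((sin y - y) - sin y * (1 - E)) by ring.
      eapply Rle_trans; [apply Rabs_triang|]. rewrite Rabs_Ropp, Rabs_mult.
      rewrite (Rabs_right (1 - E)) by lra.
      assert (T1 : Rabs y ^ 3 / 6 <= Rabs u * x * (u ^ 2 * M ^ 2 / 6)).
      { rewrite Hay. replace (u ^ 2) with (Rabs u ^ 2) by apply pow2_abs.
        assert (0 <= Rabs u * x) by nra.
        assert (x * x <= M * M) by nra.
        replace ((Rabs u * x) ^ 3 / 6) with (Rabs u * x * (Rabs u ^ 2 * (x * x)) / 6) by field.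
        replace (Rabs u * x * (Rabs u ^ 2 * M ^ 2 / 6)) with (Rabs u * x * (Rabs u ^ 2 * (M * M)) / 6) by field.
        apply Rmult_le_compat_r; [lra|]. apply Rmult_le_compat_l; [lra|].
        apply Rmult_le_compat_l; [|lra]. apply pow_le; lra. }
      assert (T2 : Rabs (sin y) * (1 - E) <= Rabs u * x * (beta * M / gm)).
      { apply Rle_trans with (Rabs u * x * (beta * x / gm)).
        - rewrite <- Hay. apply Rmult_le_compat; try lra; apply Rabs_pos.
        - apply Rmult_le_compat_l; [nra|]. unfold Rdiv. apply Rmult_le_compat_r.
          + left; apply Rinv_0_lt_compat; lra.
          + nra. }
      assert (0 <= 2 * Rabs u / X * rpow x (2 * alpha - 1)).
      { apply Rmult_le_pos; [|lra]. apply divnn; lra. }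
      lra.
    - destruct Hpow as [Hpow|Hpow]; [|lra].
      assert (Hk : x <= rpow x (2 * alpha - 1) / X).
      { rewrite Hrp, HX. apply Rmult_le_reg_r with X; [lra|].
        replace (x * X * Rpower x (2 * alpha - 2) / X / X * X) with (x * Rpower x (2 * alpha - 2)) by (field; lra).
        rewrite <- HX. apply Rmult_le_compat_l; lra. }
      assert (Rabs (sin y * E - y) <= 2 * Rabs u * x).
      { eapply Rle_trans; [apply Rabs_triang|]. rewrite Rabs_Ropp, Rabs_mult, (Rabs_right E) by lra.
        destruct HE as [[HE0 HE1] _]. rewrite Hay in Hsy |- *.
        assert (Rabs (sin y) * E <= Rabs (sin y) * 1) by (apply Rmult_le_compat_l; [apply Rabs_pos|lra]). lra. }
      assert (0 <= Rabs u * (u ^ 2 * M ^ 2 / 6 + beta * M / gm) * x).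
      { apply Rmult_le_pos; [|lra]. apply Rmult_le_pos; [lra|].
        assert (0 <= u ^ 2 * M ^ 2 / 6) by (apply divnn; [apply Rmult_le_pos; apply pow2_ge_0 | lra]).
        assert (0 <= beta * M / gm) by (apply divnn; nra). lra. }
      assert (2 * Rabs u * x <= 2 * Rabs u / X * rpow x (2 * alpha - 1)).
      { replace (2 * Rabs u / X * rpow x (2 * alpha - 1)) with (2 * Rabs u * (rpow x (2 * alpha - 1) / X)) by (field; lra).
        apply Rmult_le_compat_l; lra. }
      lra. }
  assert (HLC : 2 * Rabs u / X * (rpow x (2 * alpha - 1) * L) <= 2 * Rabs u * C0 / X * (rpow x (2 * alpha - 1) * Ls)).
  { replace (2 * Rabs u * C0 / X * (rpow x (2 * alpha - 1) * Ls)) with (2 * Rabs u / X * (rpow x (2 * alpha - 1) * (C0 * Ls))) by (field; lra).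
    apply Rmult_le_compat_l; [apply divnn; lra|]. apply Rmult_le_compat_l; lra. }
  apply Rle_trans with ((Rabs u * (u ^ 2 * M ^ 2 / 6 + beta * M / gm) * x + 2 * Rabs u / X * rpow x (2 * alpha - 1)) * L).
  - apply Rmult_le_compat_r; lra.
  - lra.
Qed.

Theorem proposition5p8
  (lam : nat -> R) (Lbar : nat -> R -> R) (eta sig : nat -> R)
  (p q : nat -> nat -> R) (g h : nat -> R -> R) (mn : nat -> R) (gam : nat -> R)
  (lm et sg b m : R) (psi phi : R -> R) (alpha beta : R)
  (Hst : Standing lam Lbar eta sig p q g h mn gam)
  (H1 : Condition1 lam eta sig g h gam lm et sg b psi phi)
  (Hm : Un_cv (fun n => gam n * (1 - mn n)) m)
  (H2 : Condition2 alpha Lbar p q gam)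
  (Hbeta0 : 0 <= beta)
  (Hbeta : beta > - (b + m) / (sg * lm)) :
  exists T0 : R, exists n0 : nat, T0 > 0 /\ (1 <= n0)%nat /\
    forall n, (n0 <= n)%nat -> forall u, Rabs u < 1 / T0 ->
      exists I,
        ImpInt0 (fun t => sin (u * t) * (exp (- beta * t / gam n) * Lbar n t)) I /\
        Rabs I >= 3 / 16 * sg * Rabs u.
Proof.
  destruct Hst as [_ [Htail [Heta [Hsig [_ [_ [_ [Hgam [Hinf _]]]]]]]]].
  destruct H1 as [_ [_ [[Hsg Hsg0] _]]].
  destruct H2 as [Halpha [_ [_ [C0 [Lstar [HC0 [HLs [[J HJ] Hdom]]]]]]]].
  set (X := 16 * C0 * Rabs J / sg + 1).
  assert (HX1 : 1 <= X).
  { unfold X. assert (0 <= 16 * C0 * Rabs J / sg); [|lra].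
    apply divnn; [|lra]. assert (H := Rabs_pos J). nra. }
  set (M := Rpower X (/ (2 * alpha - 2))).
  assert (HM1 : 1 <= M).
  { unfold M. rewrite <- (Rpower_O X) at 1 by lra. apply Rle_Rpower; [lra|].
    left; apply Rinv_0_lt_compat; lra. }
  assert (HMX : Rpower M (2 * alpha - 2) = X).
  { unfold M. rewrite Rpower_mult. replace (/ (2 * alpha - 2) * (2 * alpha - 2)) with 1 by (field; lra).
    apply Rpower_1; lra. }
  destruct (Hsg (sg / 2) ltac:(lra)) as [N1 HN1].
  destruct (Hinf (32 * beta * M)) as [N2 HN2].
  exists (4 * M), (max (max N1 N2) 1).
  split; [lra|]. split; [lia|].
  intros n Hn u Hu.
  assert (n1 : (1 <= n)%nat) by lia.
  destruct (Htail n n1) as [HL01 [HLmon _]].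
  destruct (Heta n n1) as [F [HFi HFc]].
  destruct (Hsig n n1) as [G [HGi HGc]].
  destruct HJ as [H [HHi HHc]].
  assert (Hgn : 0 < gam n) by (apply Hgam; auto).
  assert (Hsn : Rabs (sig n - sg) < sg / 2) by (apply (HN1 n); lia).
  assert (Hgb : 32 * beta * M < gam n) by (apply HN2; lia).
  set (s := fun t => sin (u * t) * (exp (- beta * t / gam n) * Lbar n t)).
  assert (intS : forall T, 0 <= T -> Riemann_integrable s 0 T).
  { intros T hT. destruct (Rle_lt_or_eq_dec 0 T hT) as [hT'|hT'].
    - apply Riemann_integrable_ext with (f := fun t => (sin (u * t) * exp (- beta * t / gam n)) * Lbar n t).
      + intros; unfold s; ring.
      + apply prod_integrable; [exact hT'| | | |].
        * intros; reg.
        * intros x Hx. rewrite Rabs_mult. assert (H0 := Rabs_pos (sin (u * x))).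
          assert (H3 : Rabs (sin (u * x)) <= 1) by (assert (H4 := SIN_bound (u * x)); unfold Rabs; destruct (Rcase_abs (sin (u * x))); lra).
          replace (- beta * x / gam n) with (- (beta * x / gam n)) by (field; lra).
          destruct (exp_neg_bounds (beta * x / gam n)) as [[E0 E1] _].
          { apply divnn; nra. }
          rewrite (Rabs_right (exp _)) by lra. nra.
        * intros x Hx. apply HL01; lra.
        * intros x y Hx Hxy Hy. apply HLmon; lra.
    - subst T. apply RiemannInt_P7. }
  set (S := fun T => match Rle_dec 0 T with left hT => RiemannInt (intS T hT) | right _ => 0 end).
  assert (SRI : forall T (hT : 0 <= T) (pr : Riemann_integrable s 0 T), S T = RiemannInt pr).
  { intros T hT pr. unfold S. destruct (Rle_dec 0 T); [apply RiemannInt_P5|contradiction]. }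
  assert (Hsb : forall x, 0 <= x -> Rabs (s x) <= Lbar n x).
  { intros x Hx. unfold s. rewrite !Rabs_mult.
    assert (H3 : Rabs (sin (u * x)) <= 1) by (assert (H4 := SIN_bound (u * x)); unfold Rabs; destruct (Rcase_abs (sin (u * x))); lra).
    replace (- beta * x / gam n) with (- (beta * x / gam n)) by (field; lra).
    destruct (exp_neg_bounds (beta * x / gam n)) as [[E0 E1] _].
    { apply divnn; nra. }
    destruct (HL01 x Hx).
    rewrite (Rabs_right (exp _)), (Rabs_right (Lbar n x)) by lra.
    assert (HH0 := Rabs_pos (sin (u * x))). 
    assert (exp (- (beta * x / gam n)) * Lbar n x <= Lbar n x) by nra. nra. }
  assert (Hstep : forall T1 T2, 0 <= T1 -> T1 <= T2 -> Rabs (S T2 - S T1) <= F T2 - F T1).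
  { intros T1 T2 h1 h12.
    destruct (HFi T2 ltac:(lra)) as [pL2 EL2]. destruct (HFi T1 h1) as [pL1 EL1].
    set (pS2 := intS T2 ltac:(lra)). set (pS1 := intS T1 h1).
    set (pS12 := RiemannInt_P23 pS2 (conj h1 h12)).
    set (pL12 := RiemannInt_P23 pL2 (conj h1 h12)).
    rewrite (SRI T2 ltac:(lra) pS2), (SRI T1 h1 pS1), <- EL2, <- EL1.
    rewrite <- (RiemannInt_P26 pS1 pS12 pS2), <- (RiemannInt_P26 pL1 pL12 pL2).
    replace (RiemannInt pS1 + RiemannInt pS12 - RiemannInt pS1) with (RiemannInt pS12) by ring.
    replace (RiemannInt pL1 + RiemannInt pL12 - RiemannInt pL1) with (RiemannInt pL12) by ring.
    apply int_abs_le; auto. intros x Hx. apply Hsb. lra. }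
  assert (HSlim : exists I, lim_at_infty S I).
  { apply cauchy_lim. intros eps Heps. destruct (HFc (eps / 2) ltac:(lra)) as [Mf HMf].
    exists (Rmax Mf 0). intros T1 T2 hT1 hT2.
    assert (Q1 := Rmax_l Mf 0). assert (Q2 := Rmax_r Mf 0).
    assert (A1 := HMf T1 ltac:(lra)). assert (A2 := HMf T2 ltac:(lra)).
    destruct (Rle_dec T1 T2).
    - assert (B := Hstep T1 T2 ltac:(lra) r).
      rewrite <- Rabs_Ropp. replace (- (S T1 - S T2)) with (S T2 - S T1) by ring.
      eapply Rle_lt_trans; [apply B|].
      unfold Rabs in A1, A2. destruct (Rcase_abs (F T1 - eta n)); destruct (Rcase_abs (F T2 - eta n)); lra.
    - assert (B := Hstep T2 T1 ltac:(lra) ltac:(lra)).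
      eapply Rle_lt_trans; [apply B|].
      unfold Rabs in A1, A2. destruct (Rcase_abs (F T1 - eta n)); destruct (Rcase_abs (F T2 - eta n)); lra. }
  destruct HSlim as [I HI].
  exists I. split.
  { exists S. split; [|exact HI].
    intros T hT. exists (intS T hT). symmetry. apply SRI; auto. }
  set (K := u ^ 2 * M ^ 2 / 6 + beta * M / gam n).
  assert (Hbnd : Rabs (I - u * sig n) <= (Rabs u * K) * sig n + (2 * Rabs u * C0 / X) * J).
  { apply (lim_ineq S G H); auto.
    intros T hT.
    destruct (HGi T ltac:(lra)) as [pG EG]. destruct (HHi T ltac:(lra)) as [pH EH].
    rewrite (SRI T ltac:(lra) (intS T ltac:(lra))), <- EG, <- EH.
    apply int_bound; [lra|].
    intros x Hx. unfold s. apply pw; try lra.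
    all: first [apply HL01; lra | apply Hdom; auto; lra | auto]. }
  assert (Hua := Rabs_pos u).
  assert (HuM : Rabs u * M < 1 / 4).
  { apply Rmult_lt_compat_r with (r := M) in Hu; [|lra].
    replace (1 / (4 * M) * M) with (1/4) in Hu by (field; lra). lra. }
  assert (Hu2 : u ^ 2 * M ^ 2 <= 1 / 16).
  { replace (u ^ 2 * M ^ 2) with ((Rabs u * M) ^ 2) by (rewrite <- (pow2_abs u); ring).
    assert (0 <= Rabs u * M) by nra. nra. }
  assert (HbM : beta * M / gam n <= 1 / 32).
  { apply Rmult_le_reg_r with (gam n); [lra|]. unfold Rdiv. rewrite Rmult_assoc, Rinv_l by lra. lra. }
  assert (HK : 0 <= K <= 1 / 24).
  { unfold K. split.
    - assert (0 <= u ^ 2 * M ^ 2) by (apply Rmult_le_pos; apply pow2_ge_0).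
      assert (0 <= beta * M / gam n) by (apply divnn; nra). lra.
    - lra. }
  assert (Hsig2 : sg / 2 < sig n < 3 * sg / 2) by (unfold Rabs in Hsn; destruct (Rcase_abs (sig n - sg)); lra).
  assert (HJX : 2 * C0 / X * J <= sg / 8).
  { assert (HJa := Rle_abs J).
    assert (Hx : sg * X = 16 * C0 * Rabs J + sg) by (unfold X; field; lra).
    apply Rle_trans with (2 * C0 / X * Rabs J).
    - apply Rmult_le_compat_l; [apply divnn; lra|lra].
    - apply Rmult_le_reg_r with (X * 8); [lra|].
      replace (2 * C0 / X * Rabs J * (X * 8)) with (16 * C0 * Rabs J) by (field; lra).
      replace (sg / 8 * (X * 8)) with (sg * X) by field. lra. }
  assert (T1 : Rabs u * K * sig n <= Rabs u * (sg / 16)).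
  { rewrite Rmult_assoc. apply Rmult_le_compat_l; [lra|]. nra. }
  assert (T2 : 2 * Rabs u * C0 / X * J <= Rabs u * (sg / 8)).
  { replace (2 * Rabs u * C0 / X * J) with (Rabs u * (2 * C0 / X * J)) by (field; lra).
    apply Rmult_le_compat_l; lra. }
  assert (T3 : Rabs (u * sig n) = Rabs u * sig n) by (rewrite Rabs_mult, (Rabs_right (sig n)) by lra; ring).
  assert (T4 : Rabs (u * sig n) <= Rabs I + Rabs (I - u * sig n)).
  { replace (u * sig n) with (I - (I - u * sig n)) at 1 by ring.
    eapply Rle_trans; [apply Rabs_triang|]. rewrite Rabs_Ropp. lra. }
  assert (Rabs u * sig n >= Rabs u * (sg / 2)) by (apply Rle_ge, Rmult_le_compat_l; lra).
  assert (0 <= Rabs u * sg) by nra.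
  nra.
Qed.
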